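(* Let $g$ be analytic, univalent and convex in $\mathbb{D}$ (i.e. $g$ maps $\mathbb{D}$ one-to-one onto a convex domain), and let $f(z)=\sum_{n=0}^\infty a_n z^n$ be analytic in $\mathbb{D}$ with $f\prec g$. Let $\lambda=\operatorname{dist}(g(0),\partial g(\mathbb{D}))$ and assume $\lambda\le 1$. For $0\le r<1$ define $$T_f(r)=\sum_{n=1}^\infty |a_n|r^n+\left(\frac{1}{2-\lambda}+\frac{r}{1-r}\right)\sum_{n=1}^\infty|a_n|^2r^{2n}.$$ Then $T_f(r)\le\lambda$ for all $0\le r\le r_*$, where $r_*\approx0.24683$ is the unique root of $3r^3-5r^2-3r+1=0$ in $(0,1)$. Moreover, for any $\lambda\in(0,1)$ there is a uniquely defined $r_0\in\left(r_*,\tfrac13\right)$, namely the solution in this interval of $$4r^3\lambda^2-(7r^3+3r^2-3r+1)\lambda+6r^3-2r^2-6r+2=0,$$ such that $T_f(r)\le\lambda$ for all $r\in[0,r_0]$.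
   Context: $\mathbb{D}$ is the open unit disk; $\operatorname{dist}(c,\partial\Omega)$ is the Euclidean distance from $c$ to the boundary of $\Omega$. $f\prec g$ means there is an analytic $\omega:\mathbb{D}\to\mathbb{D}$ with $\omega(0)=0$ and $f=g\circ\omega$. *)

(* Defs.v *)
From Stdlib Require Import Reals.
From Coquelicot Require Import Coquelicot.
Open Scope R_scope.

Definition inD (z : C) : Prop := Cmod z < 1.

(* holomorphic (complex differentiable) at every point of the unit disk;
   ex_derive on C -> C is the complex derivative (K = C_AbsRing) *)
Definition analytic_D (f : C -> C) : Prop :=
  forall z : C, inD z -> ex_derive f z.

Definition univalent_D (g : C -> C) : Prop :=
  forall z1 z2 : C, inD z1 -> inD z2 -> g z1 = g z2 -> z1 = z2.

Definition image_D (g : C -> C) (w : C) : Prop := exists z, inD z /\ g z = w.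

Definition convex_image_D (g : C -> C) : Prop :=
  forall w1 w2 : C, image_D g w1 -> image_D g w2 ->
  forall t : R, 0 <= t <= 1 ->
    image_D g (Cplus (Cmult (RtoC (1 - t)) w1) (Cmult (RtoC t) w2)).

Definition subordinate (f g : C -> C) : Prop :=
  exists omega : C -> C,
    analytic_D omega /\ (forall z, inD z -> inD (omega z)) /\
    omega (RtoC 0) = RtoC 0 /\
    (forall z, inD z -> f z = g (omega z)).

Definition boundary (Omega : C -> Prop) (w : C) : Prop :=
  (forall eps : R, 0 < eps -> exists u, Omega u /\ Cmod (Cminus u w) < eps) /\
  (forall eps : R, 0 < eps -> exists v, ~ Omega v /\ Cmod (Cminus v w) < eps).

(* dist(c, boundary Omega) as an extended real (+oo if the boundary is empty) *)
Definition dist_boundary (c : C) (Omega : C -> Prop) : Rbar :=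
  Glb_Rbar (fun d : R => exists w, boundary Omega w /\ d = Cmod (Cminus w c)).

Definition T_f (a : nat -> C) (lam r : R) : R :=
  Series (fun n => Cmod (a (S n)) * r ^ (S n))
  + (1 / (2 - lam) + r / (1 - r)) *
    Series (fun n => (Cmod (a (S n))) ^ 2 * r ^ (2 * S n)).

(* Main.v *)
Require Import Defs.
From Stdlib Require Import Reals Lra Lia Psatz.
From Coquelicot Require Import Coquelicot.
Open Scope R_scope.

Fixpoint csum (N : nat) (F : nat -> C) : C :=
  match N with O => RtoC 0 | S N' => Cplus (csum N' F) (F N') end.
Fixpoint rsum (N : nat) (F : nat -> R) : R :=
  match N with O => 0 | S N' => rsum N' F + F N' end.

Lemma C_eq (x y : C) : fst x = fst y -> snd x = snd y -> x = y.
Proof. destruct x, y; simpl; intros; subst; auto. Qed.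

Lemma csum_ext N F G : (forall k, (k < N)%nat -> F k = G k) -> csum N F = csum N G.
Proof. induction N; simpl; intros H; auto. rewrite IHN; [rewrite H|]; auto; intros; apply H; lia. Qed.

Lemma rsum_ext N F G : (forall k, (k < N)%nat -> F k = G k) -> rsum N F = rsum N G.
Proof. induction N; simpl; intros H; auto. rewrite IHN; [rewrite H|]; auto; intros; apply H; lia. Qed.

Lemma csum_plus N F G : csum N (fun k => Cplus (F k) (G k)) = Cplus (csum N F) (csum N G).
Proof. induction N; simpl. apply C_eq; simpl; ring. rewrite IHN. ring. Qed.

Lemma csum_scal N c F : csum N (fun k => Cmult c (F k)) = Cmult c (csum N F).
Proof. induction N; simpl. apply C_eq; simpl; ring. rewrite IHN. ring. Qed.

Lemma csum_RtoC N w : csum N (fun k => RtoC (w k)) = RtoC (rsum N w).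
Proof. induction N; simpl. auto. rewrite IHN. now rewrite RtoC_plus. Qed.

Lemma csum_norm N F : Cmod (csum N F) <= rsum N (fun k => Cmod (F k)).
Proof. induction N; simpl. rewrite Cmod_0; lra. eapply Rle_trans. apply Cmod_triangle. lra. Qed.

Lemma rsum_le N F G : (forall k, (k < N)%nat -> F k <= G k) -> rsum N F <= rsum N G.
Proof. induction N; simpl; intros H. lra. assert (F N <= G N) by (apply H; lia).
  assert (rsum N F <= rsum N G) by (apply IHN; intros; apply H; lia). lra. Qed.

Lemma rsum_scal N c F : rsum N (fun k => c * F k) = c * rsum N F.
Proof. induction N; simpl. ring. rewrite IHN. ring. Qed.

Lemma rsum_nonneg N F : (forall k, (k < N)%nat -> 0 <= F k) -> 0 <= rsum N F.
Proof. intros H. replace 0 with (rsum N (fun _ => 0)). apply rsum_le; auto.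
  clear H; induction N; simpl; auto. rewrite IHN; ring. Qed.

Lemma rsum_zero N F : (forall k, (k < N)%nat -> 0 <= F k) -> rsum N F = 0 ->
  forall k, (k < N)%nat -> F k = 0.
Proof. induction N; simpl; intros H H0 k Hk. lia.
  assert (0 <= rsum N F) by (apply rsum_nonneg; intros; apply H; lia).
  assert (0 <= F N) by (apply H; lia).
  destruct (Nat.eq_dec k N). subst; lra. apply IHN. intros; apply H; lia. lra. lia. Qed.

Lemma convex_comb (g : C -> C) : convex_image_D g ->
  forall N (w : nat -> R) (P : nat -> C),
  (forall k, (k < N)%nat -> 0 <= w k) -> rsum N w = 1 ->
  (forall k, (k < N)%nat -> image_D g (P k)) ->
  image_D g (csum N (fun k => Cmult (RtoC (w k)) (P k))).
Proof.
  intros Hc N. induction N; intros w P Hw Hs HP; simpl in *. lra.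
  assert (0 <= rsum N w) by (apply rsum_nonneg; intros; apply Hw; lia).
  assert (0 <= w N) by (apply Hw; lia).
  destruct (Req_dec (rsum N w) 0) as [HW0|HW0].
  - assert (HN: w N = 1) by lra.
    replace (csum N (fun k => Cmult (RtoC (w k)) (P k))) with (RtoC 0).
    rewrite HN. replace (Cplus (RtoC 0) (Cmult (RtoC 1) (P N))) with (P N) by ring.
    apply HP; lia.
    assert (Hz : forall k, (k < N)%nat -> w k = 0).
    { apply rsum_zero; [intros; apply Hw; lia | exact HW0]. }
    rewrite (csum_ext _ _ (fun k => RtoC 0)).
    { clear. induction N; simpl; [reflexivity|]. rewrite <- IHN. apply C_eq; simpl; ring. }
    intros k Hk. rewrite (Hz k Hk). ring.
  - set (W := rsum N w) in *.
    assert (HWp: 0 < W) by (destruct H as [H|H]; [exact H| exfalso; apply HW0; symmetry; exact H]).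
    assert (HI : image_D g (csum N (fun k => Cmult (RtoC (w k / W)) (P k)))).
    { apply IHN. intros; apply Rdiv_le_0_compat; [apply Hw; lia| lra].
      unfold Rdiv. rewrite (rsum_ext _ _ (fun k => / W * w k)).
      rewrite rsum_scal. fold W. field. auto. intros; ring.
      intros; apply HP; lia. }
    assert (HwN1 : w N <= 1) by lra.
    specialize (Hc _ _ HI (HP N (Nat.lt_succ_diag_r N)) (w N) (conj H0 HwN1)).
    replace (Cplus (csum N (fun k => Cmult (RtoC (w k)) (P k))) (Cmult (RtoC (w N)) (P N)))
      with (Cplus (Cmult (RtoC (1 - w N)) (csum N (fun k => Cmult (RtoC (w k / W)) (P k))))
            (Cmult (RtoC (w N)) (P N))); auto.
    f_equal. rewrite <- csum_scal. apply csum_ext. intros k _.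
    replace (1 - w N) with W by lra.
    rewrite Cmult_assoc, <- RtoC_mult. f_equal. f_equal. field. auto.
Qed.

Definition zeta (N : nat) : C := (cos (2 * PI / INR N), sin (2 * PI / INR N)).

Lemma zeta_pow N j : Cpow (zeta N) j = (cos (2 * PI / INR N * INR j), sin (2 * PI / INR N * INR j)).
Proof.
  induction j. simpl. rewrite Rmult_0_r, cos_0, sin_0. reflexivity.
  rewrite Cpow_S, IHj. rewrite S_INR. unfold zeta, Cmult; simpl.
  apply C_eq; simpl.
  replace (2 * PI / INR N * (INR j + 1)) with (2 * PI / INR N + 2 * PI / INR N * INR j) by ring.
  rewrite cos_plus. ring.
  replace (2 * PI / INR N * (INR j + 1)) with (2 * PI / INR N + 2 * PI / INR N * INR j) by ring.
  rewrite sin_plus. ring.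
Qed.

Lemma Cmod_cs x : Cmod (cos x, sin x) = 1.
Proof. unfold Cmod. cbn [fst snd]. replace (cos x ^ 2 + sin x ^ 2) with 1.
  apply sqrt_1. pose proof (sin2_cos2 x) as H. unfold Rsqr in H. nra. Qed.

Lemma Cmod_zeta_pow N j : Cmod (Cpow (zeta N) j) = 1.
Proof. rewrite zeta_pow. apply Cmod_cs. Qed.

Lemma zeta_N N : (0 < N)%nat -> Cpow (zeta N) N = RtoC 1.
Proof. intros H. rewrite zeta_pow.
  replace (2 * PI / INR N * INR N) with (2 * PI). rewrite cos_2PI, sin_2PI. reflexivity.
  field. apply not_0_INR. lia. Qed.

Lemma zeta_ne1 N j : (0 < j < N)%nat -> Cpow (zeta N) j <> RtoC 1.
Proof.
  intros H E. rewrite zeta_pow in E. injection E as E1 E2.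
  set (x := 2 * PI / INR N * INR j) in *.
  assert (HN : 0 < INR N) by (apply lt_0_INR; lia).
  assert (Hj : 0 < INR j < INR N) by (split; [apply lt_0_INR; lia | apply lt_INR; lia]).
  assert (Hx : 0 < x < 2 * PI).
  { assert (Hq : INR j / INR N < 1).
    { apply Rmult_lt_reg_r with (INR N). lra. unfold Rdiv. rewrite Rmult_assoc, Rinv_l; lra. }
    assert (Hq0 : 0 < INR j / INR N) by (apply Rdiv_lt_0_compat; lra).
    replace x with (2 * PI * (INR j / INR N)) by (unfold x; field; lra).
    pose proof PI_RGT_0. split; nra. }
  apply sin_eq_0_0 in E2. destruct E2 as [k Hk].
  pose proof PI_RGT_0.
  assert (0 < IZR k < 2) by (split; nra).
  destruct H1 as [H1 H2]. apply lt_IZR in H1. apply lt_IZR in H2.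
  assert (k = 1%Z) by lia. subst k. rewrite Hk in E1. simpl in E1. rewrite Rmult_1_l, cos_PI in E1. lra.
Qed.

Lemma geom_csum (x : C) N : Cmult (Cminus x (RtoC 1)) (csum N (fun k => Cpow x k)) = Cminus (Cpow x N) (RtoC 1).
Proof. induction N; simpl. apply C_eq; simpl; ring.
  rewrite Cmult_plus_distr_l, IHN. ring. Qed.

Lemma Cpow_comm_mult (x : C) a b : Cpow (Cpow x a) b = Cpow (Cpow x b) a.
Proof. rewrite <- !Cpow_mult_r. now rewrite Nat.mul_comm. Qed.

Lemma root_sum N j : (0 < j < N)%nat ->
  csum N (fun k => Cpow (Cpow (zeta N) k) j) = RtoC 0.
Proof.
  intros H. rewrite (csum_ext _ _ (fun k => Cpow (Cpow (zeta N) j) k)).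
  2: intros; apply Cpow_comm_mult.
  set (x := Cpow (zeta N) j).
  assert (Hx1 : Cminus x (RtoC 1) <> RtoC 0).
  { intro E. apply (zeta_ne1 N j H). fold x. apply Ceq_minus. exact E. }
  assert (HxN : Cpow x N = RtoC 1).
  { unfold x. rewrite Cpow_comm_mult, zeta_N by lia. apply Cpow_1_l. }
  pose proof (geom_csum x N) as G. rewrite HxN in G.
  replace (Cminus (RtoC 1) (RtoC 1)) with (RtoC 0) in G by (apply C_eq; simpl; ring).
  rewrite <- (Cmult_1_l (csum _ _)). rewrite <- (Cinv_l _ Hx1). rewrite <- Cmult_assoc, G. ring.
Qed.

Lemma csum_one N : csum N (fun _ => RtoC 1) = RtoC (INR N).
Proof. induction N. reflexivity. cbn [csum]. rewrite IHN, S_INR. apply C_eq; simpl; ring. Qed.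

Lemma root_sum0 N : csum N (fun k => Cpow (Cpow (zeta N) k) 0) = RtoC (INR N).
Proof. rewrite <- csum_one. apply csum_ext. intros; reflexivity. Qed.

Definition yk (N k : nat) : C := Cpow (zeta N) k.
Definition wt (N n : nat) (u : C) (k : nat) : R := (1 + Re (Cmult u (Cpow (yk N k) n))) / INR N.
Definition Cm (N n : nat) (u : C) (m : nat) : C :=
  csum N (fun k => Cmult (RtoC (wt N n u k)) (Cpow (yk N k) m)).

Lemma csum_conj N F : csum N (fun k => Cconj (F k)) = Cconj (csum N F).
Proof. induction N; simpl. apply C_eq; simpl; ring. rewrite IHN, Cplus_conj. reflexivity. Qed.

Lemma conj_unit (y : C) : Cmod y = 1 -> Cmult (Cconj y) y = RtoC 1.
Proof. intros H. pose proof (Cmod2_conj y) as E. rewrite H in E. rewrite Cmult_comm, <- E.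
  apply C_eq; simpl; ring. Qed.

Lemma Cmod_yk N k : Cmod (yk N k) = 1.
Proof. apply Cmod_zeta_pow. Qed.

Lemma RtoC_INR_neq N : (0 < N)%nat -> RtoC (INR N) <> RtoC 0.
Proof. intros H E. injection E. apply not_0_INR. lia. Qed.

Lemma Cm_decomp N n u m : (0 < N)%nat ->
  Cm N n u m = Cmult (Cinv (RtoC (INR N)))
    (Cplus (Cplus (csum N (fun k => Cpow (yk N k) m))
       (Cmult (Cdiv u (RtoC 2)) (csum N (fun k => Cpow (yk N k) (n + m)))))
       (Cmult (Cdiv (Cconj u) (RtoC 2)) (csum N (fun k => Cmult (Cpow (Cconj (yk N k)) n) (Cpow (yk N k) m))))).
Proof.
  intros HN. unfold Cm. rewrite <- !csum_scal, <- !csum_plus, <- csum_scal. apply csum_ext.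
  intros k _. unfold wt. rewrite RtoC_div by (apply not_0_INR; lia).
  rewrite RtoC_plus, re_alt, Cmult_conj, Cpow_conj, Cpow_add_r.
  field. all: try (apply RtoC_INR_neq; lia). all: try (intro E; injection E; lra).
Qed.

Lemma S3_ge N n d : csum N (fun k => Cmult (Cpow (Cconj (yk N k)) n) (Cpow (yk N k) (n + d)))
  = csum N (fun k => Cpow (Cpow (zeta N) k) d).
Proof. apply csum_ext. intros k _. rewrite Cpow_add_r, Cmult_assoc, <- Cpow_mult_l, conj_unit by apply Cmod_yk.
  rewrite Cpow_1_l. unfold yk. ring. Qed.

Lemma S3_lt N m d : csum N (fun k => Cmult (Cpow (Cconj (yk N k)) (m + d)) (Cpow (yk N k) m))
  = Cconj (csum N (fun k => Cpow (Cpow (zeta N) k) d)).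
Proof. rewrite <- csum_conj. apply csum_ext. intros k _. rewrite Cpow_add_r.
  rewrite Cpow_conj. 
  replace (Cmult (Cmult (Cpow (Cconj (yk N k)) m) (Cpow (Cconj (yk N k)) d)) (Cpow (yk N k) m))
    with (Cmult (Cpow (Cmult (Cconj (yk N k)) (yk N k)) m) (Cpow (Cconj (yk N k)) d))
    by (rewrite Cpow_mult_l; ring).
  rewrite conj_unit by apply Cmod_yk. rewrite Cpow_1_l. unfold yk. ring. Qed.

Lemma conj0 : Cconj (RtoC 0) = RtoC 0.
Proof. apply C_eq; simpl; ring. Qed.

Lemma Cm_0 N n u : (0 < n)%nat -> (n < N)%nat -> Cm N n u 0 = RtoC 1.
Proof.
  intros Hn HN. rewrite Cm_decomp by lia.
  rewrite Nat.add_0_r. unfold yk at 1. rewrite root_sum0.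
  pose proof (S3_lt N 0 n) as E. rewrite Nat.add_0_l in E. rewrite E. unfold yk. rewrite root_sum by lia. rewrite conj0.
  field. all: try (apply RtoC_INR_neq; lia).
Qed.

Lemma Cm_n N n u : (0 < n)%nat -> (2 * n < N)%nat -> Cm N n u n = Cdiv (Cconj u) (RtoC 2).
Proof.
  intros Hn HN. rewrite Cm_decomp by lia.
  pose proof (S3_ge N n 0) as E. rewrite Nat.add_0_r in E. rewrite E.
  unfold yk. rewrite !root_sum by lia. rewrite root_sum0.
  field. all: try (apply RtoC_INR_neq; lia). all: try (intro E; injection E; lra).
Qed.

Lemma Cm_other N n u m : (0 < n)%nat -> (0 < m)%nat -> (m + n < N)%nat -> m <> n ->
  Cm N n u m = RtoC 0.
Proof.
  intros Hn Hm HN Hmn. rewrite Cm_decomp by lia.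
  assert (H3 : csum N (fun k => Cmult (Cpow (Cconj (yk N k)) n) (Cpow (yk N k) m)) = RtoC 0).
  { destruct (Nat.lt_ge_cases n m).
    - replace m with (n + (m - n))%nat by lia. rewrite S3_ge. apply root_sum. lia.
    - replace n with (m + (n - m))%nat by lia. rewrite S3_lt. rewrite root_sum by lia. apply conj0. }
  rewrite H3. unfold yk. rewrite !root_sum by lia. apply C_eq; simpl; ring.
Qed.

Lemma Re_le_Cmod (z : C) : Rabs (Re z) <= Cmod z.
Proof. eapply Rle_trans. apply Rmax_l. apply Rmax_Cmod. Qed.
Lemma Im_le_Cmod (z : C) : Rabs (Im z) <= Cmod z.
Proof. eapply Rle_trans. apply Rmax_r. apply Rmax_Cmod. Qed.

Lemma wt_nonneg N n u k : (0 < N)%nat -> Cmod u = 1 -> 0 <= wt N n u k.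
Proof. intros HN Hu. unfold wt. apply Rdiv_le_0_compat. 2: apply lt_0_INR; lia.
  pose proof (Re_le_Cmod (Cmult u (Cpow (yk N k) n))). rewrite Cmod_mult, Cmod_pow, Cmod_yk, Hu, pow1 in H.
  apply Rabs_le_between in H. lra. Qed.

Lemma wt_sum N n u : (0 < n)%nat -> (n < N)%nat -> rsum N (wt N n u) = 1.
Proof. intros Hn HN. pose proof (Cm_0 N n u Hn HN) as E. unfold Cm in E.
  rewrite (csum_ext _ _ (fun k => RtoC (wt N n u k))) in E by (intros; simpl; apply C_eq; simpl; ring).
  rewrite csum_RtoC in E. injection E. auto. Qed.

Lemma Cm_bound N n u m : (0 < n)%nat -> (n < N)%nat -> Cmod u = 1 -> Cmod (Cm N n u m) <= 1.
Proof. intros Hn HN Hu. unfold Cm. eapply Rle_trans. apply csum_norm.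
  rewrite <- (wt_sum N n u Hn HN). apply Req_le. apply rsum_ext. intros k _.
  rewrite Cmod_mult, Cmod_pow, Cmod_yk, pow1, Cmod_R, Rabs_pos_eq. ring. apply wt_nonneg; auto. lia. Qed.

Lemma sum_n_csum (F : nat -> C) M : sum_n F M = csum (S M) F.
Proof. induction M. rewrite sum_O. simpl. apply C_eq; simpl; ring.
  rewrite sum_Sn, IHM. reflexivity. Qed.

Lemma csum_swap N M (F : nat -> nat -> C) :
  csum N (fun k => csum M (fun m => F k m)) = csum M (fun m => csum N (fun k => F k m)).
Proof. induction N; simpl. clear. induction M; simpl. reflexivity. rewrite <- IHM. apply C_eq; simpl; ring.
  rewrite IHN, <- csum_plus. reflexivity. Qed.

Lemma csum_zero N F : (forall k, (k < N)%nat -> F k = RtoC 0) -> csum N F = RtoC 0.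
Proof. induction N; simpl; intros H. reflexivity. rewrite IHN, H by (auto; lia). apply C_eq; simpl; ring. Qed.

Lemma csum_ind j M G : (j < M)%nat -> csum M (fun m => if Nat.eqb m j then G m else RtoC 0) = G j.
Proof. induction M; intros H. lia. simpl. destruct (Nat.eq_dec j M).
  - subst. rewrite Nat.eqb_refl. rewrite csum_zero. apply C_eq; simpl; ring.
    intros k Hk. destruct (Nat.eqb_spec k M). lia. reflexivity.
  - rewrite IHM by lia. destruct (Nat.eqb_spec M j). lia. apply C_eq; simpl; ring. Qed.

Lemma RtoC_pow r m : Cpow (RtoC r) m = RtoC (r ^ m).
Proof. induction m; simpl. reflexivity. rewrite IHm. now rewrite RtoC_mult. Qed.

Lemma geom_tail (q : R) L M : 0 <= q < 1 ->
  rsum M (fun m => if Nat.leb L m then q ^ m else 0) <= q ^ L / (1 - q).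
Proof.
  intros Hq. assert (HL : 0 <= q ^ L / (1 - q)) by (apply Rdiv_le_0_compat; [apply pow_le; lra | lra]).
  assert (E : rsum M (fun m => if Nat.leb L m then q ^ m else 0) =
     if Nat.leb L M then (q ^ L - q ^ M) / (1 - q) else 0).
  { induction M; simpl.
    - destruct L; simpl; auto. field. lra.
    - rewrite IHM. destruct (Nat.leb_spec L M); destruct (Nat.leb_spec L (S M)); try lia.
      + field. lra.
      + assert (L = S M) by lia. subst. simpl. field. lra.
      + ring. }
  rewrite E. destruct (Nat.leb L M); auto.
  unfold Rdiv. apply Rmult_le_compat_r. apply Rlt_le, Rinv_0_lt_compat; lra.
  pose proof (pow_le q M). lra.
Qed.

Lemma eventually_all N (P : nat -> nat -> Prop) :
  (forall k, (k < N)%nat -> exists M0, forall M, (M0 <= M)%nat -> P k M) ->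
  exists M0, forall M, (M0 <= M)%nat -> forall k, (k < N)%nat -> P k M.
Proof. induction N; intros H. exists O; intros; lia.
  destruct IHN as [M1 H1]. intros; apply H; lia.
  destruct (H N) as [M2 H2]. lia. exists (max M1 M2). intros M HM k Hk.
  destruct (Nat.eq_dec k N). subst; apply H2; lia. apply H1; lia. Qed.

Lemma csum_minus N F G : csum N (fun k => Cminus (F k) (G k)) = Cminus (csum N F) (csum N G).
Proof. induction N; simpl. apply C_eq; simpl; ring. rewrite IHN. ring. Qed.

Definition Eco (n : nat) (u : C) (m : nat) : C :=
  Cplus (if Nat.eqb m 0 then RtoC 1 else RtoC 0) (if Nat.eqb m n then Cdiv (Cconj u) (RtoC 2) else RtoC 0).

Lemma avg_bound (a : nat -> C) (f : C -> C) (r q K : R) (n N : nat) (u : C) :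
  (forall z, inD z -> is_pseries a z (f z)) ->
  0 < r < 1 -> 0 <= q < 1 -> 0 <= K ->
  (forall m, Cmod (a m) * r ^ m <= K * q ^ m) ->
  (0 < n)%nat -> (2 * n < N)%nat -> Cmod u = 1 ->
  Cmod (Cminus (csum N (fun k => Cmult (RtoC (wt N n u k)) (f (Cmult (RtoC r) (yk N k)))))
          (Cplus (a O) (Cmult (Cdiv (Cconj u) (RtoC 2)) (Cmult (a n) (RtoC (r ^ n))))))
  <= K * (q ^ (N - n) / (1 - q)).
Proof.
  intros Hf Hr Hq HK Hb Hn HN Hu.
  set (z := fun k => Cmult (RtoC r) (yk N k)).
  set (S := fun k M => sum_n (fun m => scal (pow_n (z k) m) (a m)) M).
  apply Rle_plus_epsilon. intros eta Heta.
  assert (Hev : forall k, (k < N)%nat -> exists M0, forall M, (M0 <= M)%nat ->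
                 Cmod (Cminus (S k M) (f (z k))) < eta).
  { intros k Hk. assert (Hz : inD (z k)).
    { unfold inD, z. rewrite Cmod_mult, Cmod_yk, Cmod_R, Rabs_pos_eq; lra. }
    specialize (Hf _ Hz). unfold is_pseries, is_series in Hf.
    pose proof (norm_factor_gt_0 (K:=C_AbsRing) (V:=C_NormedModule)) as Hnf.
    assert (He : 0 < eta / norm_factor (K:=C_AbsRing) (V:=C_NormedModule)) by (apply Rdiv_lt_0_compat; lra).
    pose proof (proj1 (@filterlim_locally nat C_UniformSpace eventually _ _ (f (z k))) Hf (mkposreal _ He)) as Hf2. clear Hf. rename Hf2 into Hf.
    destruct Hf as [M0 HM0]. exists M0. intros M HM. specialize (HM0 M HM).
    apply (@norm_compat2 C_AbsRing C_NormedModule) in HM0. simpl in HM0.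
    replace (norm_factor * (eta / norm_factor)) with eta in HM0 by (field; lra).
    exact HM0. }
  apply eventually_all in Hev. destruct Hev as [M0 HM0].
  set (M := max M0 n). specialize (HM0 M (Nat.le_max_l _ _)).
  set (L := Cplus (a O) (Cmult (Cdiv (Cconj u) (RtoC 2)) (Cmult (a n) (RtoC (r ^ n))))).
  assert (Hsum : csum N (fun k => Cmult (RtoC (wt N n u k)) (S k M))
                 = csum (Datatypes.S M) (fun m => Cmult (Cmult (a m) (RtoC (r ^ m))) (Cm N n u m))).
  { unfold S. rewrite (csum_ext _ _ (fun k => csum (Datatypes.S M) (fun m =>
        Cmult (Cmult (a m) (RtoC (r ^ m))) (Cmult (RtoC (wt N n u k)) (Cpow (yk N k) m))))).
    rewrite csum_swap. apply csum_ext. intros m _. unfold Cm. rewrite csum_scal. reflexivity.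
    intros k _. rewrite sum_n_csum, <- csum_scal. apply csum_ext. intros m _.
    change (scal (pow_n (z k) m) (a m)) with (Cmult (Cpow (z k) m) (a m)).
    unfold z. rewrite Cpow_mult_l, RtoC_pow. ring. }
  assert (HL : csum (Datatypes.S M) (fun m => Cmult (Cmult (a m) (RtoC (r ^ m))) (Eco n u m)) = L).
  { unfold Eco. rewrite (csum_ext _ _ (fun m => Cplus
       (if Nat.eqb m 0 then Cmult (a m) (RtoC (r ^ m)) else RtoC 0)
       (if Nat.eqb m n then Cmult (Cdiv (Cconj u) (RtoC 2)) (Cmult (a m) (RtoC (r ^ m))) else RtoC 0))).
    rewrite csum_plus, !csum_ind by lia. unfold L. simpl. apply C_eq; simpl; ring.
    intros m _. destruct (Nat.eqb m 0); destruct (Nat.eqb m n); ring. }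
  change (csum N (fun k => Cmult (RtoC (wt N n u k)) (f (Cmult (RtoC r) (yk N k)))))
    with (csum N (fun k => Cmult (RtoC (wt N n u k)) (f (z k)))).
  replace (Cminus (csum N (fun k => Cmult (RtoC (wt N n u k)) (f (z k)))) L) with
    (Cplus (csum N (fun k => Cmult (RtoC (wt N n u k)) (Cminus (f (z k)) (S k M))))
      (csum (Datatypes.S M) (fun m => Cmult (Cmult (a m) (RtoC (r ^ m))) (Cminus (Cm N n u m) (Eco n u m))))).
  2: { rewrite (csum_ext (Datatypes.S M) _ (fun m => Cminus (Cmult (Cmult (a m) (RtoC (r ^ m))) (Cm N n u m))
               (Cmult (Cmult (a m) (RtoC (r ^ m))) (Eco n u m)))) by (intros; ring).
       rewrite (csum_ext N _ (fun k => Cminus (Cmult (RtoC (wt N n u k)) (f (z k))) (Cmult (RtoC (wt N n u k)) (S k M))))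
         by (intros; ring).
       rewrite !csum_minus, HL, <- Hsum. ring. }
  eapply Rle_trans. apply Cmod_triangle. rewrite Rplus_comm. apply Rplus_le_compat.
  - eapply Rle_trans. apply csum_norm.
    eapply Rle_trans. apply rsum_le with (G := fun m => K * (if Nat.leb (N - n) m then q ^ m else 0)).
    + intros m _. rewrite !Cmod_mult, Cmod_R, Rabs_pos_eq by (apply pow_le; lra).
      destruct (Nat.leb_spec (N - n) m).
      * rewrite Rmult_comm. assert (HC : Cmod (Cminus (Cm N n u m) (Eco n u m)) <= 1).
        { unfold Eco. destruct (Nat.eqb_spec m 0). lia. destruct (Nat.eqb_spec m n). lia.
          replace (Cminus (Cm N n u m) (Cplus (RtoC 0) (RtoC 0))) with (Cm N n u m) by (apply C_eq; simpl; ring).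
          apply Cm_bound; auto; lia. }
        specialize (Hb m). pose proof (Cmod_ge_0 (a m)). assert (0 <= r ^ m) by (apply pow_le; lra).
        apply Rle_trans with (1 * (Cmod (a m) * r ^ m)).
        { apply Rmult_le_compat_r. apply Rmult_le_pos; lra. exact HC. }
        lra.
      * replace (Cminus (Cm N n u m) (Eco n u m)) with (RtoC 0). rewrite Cmod_0. lra.
        unfold Eco. destruct (Nat.eqb_spec m 0).
        { subst. rewrite Cm_0 by lia. destruct (Nat.eqb_spec 0 n). lia. apply C_eq; simpl; ring. }
        destruct (Nat.eqb_spec m n).
        { subst. rewrite Cm_n by lia. apply C_eq; simpl; ring. }
        rewrite Cm_other by lia. apply C_eq; simpl; ring.
    + rewrite rsum_scal. apply Rmult_le_compat_l; auto. apply geom_tail; auto.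
  - eapply Rle_trans. apply csum_norm.
    eapply Rle_trans. apply rsum_le with (G := fun k => wt N n u k * eta).
    + intros k Hk. rewrite Cmod_mult, Cmod_R, Rabs_pos_eq by (apply wt_nonneg; auto; lia).
      apply Rmult_le_compat_l. apply wt_nonneg; auto; lia.
      rewrite <- Cmod_opp. replace (Copp (Cminus (f (z k)) (S k M))) with (Cminus (S k M) (f (z k))) by ring.
      left. exact (HM0 k Hk).
    + rewrite (rsum_ext _ _ (fun k => eta * wt N n u k)) by (intros; ring).
      rewrite rsum_scal, wt_sum by lia. lra.
Qed.

Lemma coef_geom (a : nat -> C) (f : C -> C) (r : R) :
  (forall z, inD z -> is_pseries a z (f z)) -> 0 < r < 1 ->
  exists K q, 0 <= K /\ 0 <= q < 1 /\ forall m, Cmod (a m) * r ^ m <= K * q ^ m.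
Proof.
  intros Hf Hr. set (r' := (1 + r) / 2).
  assert (Hz : inD (RtoC r')) by (unfold inD, r'; rewrite Cmod_R, Rabs_pos_eq; lra).
  specialize (Hf _ Hz). unfold is_pseries, is_series in Hf.
  destruct (filterlim_bounded (K:=C_AbsRing) (V:=C_NormedModule) _ (ex_intro (fun x => filterlim _ eventually (locally x)) _ Hf)) as [M HM].
  assert (HM0 : 0 <= M) by (eapply Rle_trans; [apply (@norm_ge_0 C_AbsRing C_NormedModule) | apply (HM O)]).
  exists (2 * M), (r / r'). split. lra. split. split. apply Rdiv_le_0_compat; unfold r'; lra.
  apply Rmult_lt_reg_r with r'. unfold r'; lra. unfold Rdiv. rewrite Rmult_assoc, Rinv_l. unfold r'; lra. unfold r'; lra.
  intros m.
  assert (Ht : Cmod (a m) * r' ^ m <= 2 * M).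
  { replace (Cmod (a m) * r' ^ m) with (norm (scal (pow_n (RtoC r') m) (a m))).
    2: { change (Cmod (Cmult (Cpow (RtoC r') m) (a m)) = Cmod (a m) * r' ^ m).
         rewrite Cmod_mult, RtoC_pow, Cmod_R, Rabs_pos_eq. ring. apply pow_le; unfold r'; lra. }
    destruct m.
    - pose proof (sum_O (fun k => scal (pow_n (RtoC r') k) (a k))) as E. cbv beta in E. rewrite <- E. specialize (HM O). eapply Rle_trans; [exact HM | lra].
    - set (S0 := fun p => sum_n (fun k => scal (pow_n (RtoC r') k) (a k)) p).
      assert (HS : forall p, Cmod (S0 p) <= M) by (intro p; exact (HM p)).
      change (Cmod (Cmult (Cpow (RtoC r') (S m)) (a (S m))) <= 2 * M).
      replace (Cmult (Cpow (RtoC r') (S m)) (a (S m))) with (Cminus (S0 (S m)) (S0 m)).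
      eapply Rle_trans. apply Cmod_triangle. rewrite Cmod_opp. pose proof (HS (S m)). pose proof (HS m). lra.
      unfold S0. rewrite sum_Sn. change (plus ?x ?y) with (Cplus x y).
      change (scal (pow_n (RtoC r') (S m)) (a (S m))) with (Cmult (Cpow (RtoC r') (S m)) (a (S m))).
      generalize (sum_n (fun k => scal (pow_n (RtoC r') k) (a k)) m). intro T. change C in T. ring. }
  replace (r ^ m) with (r' ^ m * (r / r') ^ m).
  2: { rewrite <- Rpow_mult_distr. f_equal. field. unfold r'; lra. }
  assert (0 <= (r / r') ^ m) by (apply pow_le; apply Rdiv_le_0_compat; unfold r'; lra).
  rewrite <- Rmult_assoc. apply Rmult_le_compat_r; auto.
Qed.

Lemma point_lemma (g f : C -> C) (a : nat -> C) (c : C) (n N : nat) (r K q eps : R) (v : C) :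
  convex_image_D g ->
  (forall z, inD z -> is_pseries a z (f z)) ->
  (forall z, inD z -> image_D g (f z)) ->
  a O = c -> (0 < n)%nat -> 0 < r < 1 -> a n <> RtoC 0 ->
  0 <= q < 1 -> 0 <= K -> (forall m, Cmod (a m) * r ^ m <= K * q ^ m) ->
  (2 * n < N)%nat -> K * (q ^ (N - n) / (1 - q)) < eps ->
  Cmod v = 1 ->
  exists Q, image_D g Q /\
    Cmod (Cminus Q (Cplus c (Cmult (RtoC (Cmod (a n) * r ^ n / 2)) v))) < eps.
Proof.
  intros Hconv Hf Hsub Ha0 Hn Hr Han Hq HK Hb HN Heps Hv.
  assert (Hman : 0 < Cmod (a n)) by (apply Cmod_gt_0; auto).
  set (u := Cconj (Cdiv (Cmult v (RtoC (Cmod (a n)))) (a n))).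
  assert (Hu : Cmod u = 1).
  { unfold u. rewrite Cmod_conj, Cmod_div by auto. rewrite Cmod_mult, Hv, Cmod_R, Rabs_pos_eq by lra. field; lra. }
  exists (csum N (fun k => Cmult (RtoC (wt N n u k)) (f (Cmult (RtoC r) (yk N k))))).
  split.
  - apply convex_comb; auto.
    + intros; apply wt_nonneg; auto; lia.
    + apply wt_sum; lia.
    + intros k _. apply Hsub. unfold inD. rewrite Cmod_mult, Cmod_yk, Cmod_R, Rabs_pos_eq; lra.
  - eapply Rle_lt_trans. 2: exact Heps.
    pose proof (avg_bound a f r q K n N u Hf Hr Hq HK Hb Hn HN Hu) as H.
    replace (Cplus c (Cmult (RtoC (Cmod (a n) * r ^ n / 2)) v)) with
      (Cplus (a O) (Cmult (Cdiv (Cconj u) (RtoC 2)) (Cmult (a n) (RtoC (r ^ n))))); auto.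
    rewrite Ha0. f_equal. unfold u. rewrite Cconj_conj.
    rewrite RtoC_div by lra. rewrite !RtoC_mult. field. all: try exact Han. all: try (intro E; injection E; lra).
Qed.

Lemma ball_lemma (g f : C -> C) (a : nat -> C) (c : C) (n : nat) (r s0 : R) :
  convex_image_D g ->
  (forall z, inD z -> is_pseries a z (f z)) ->
  (forall z, inD z -> image_D g (f z)) ->
  image_D g c -> a O = c ->
  (0 < n)%nat -> 0 < r < 1 -> a n <> RtoC 0 ->
  0 <= s0 < Cmod (a n) * r ^ n / 2 ->
  forall z, Cmod (Cminus z c) < s0 -> image_D g z.
Proof.
  intros Hconv Hf Hsub Hc Ha0 Hn Hr Han Hs0 z Hz.
  set (rho := Cmod (a n) * r ^ n / 2) in *.
  assert (Hman : 0 < Cmod (a n)) by (apply Cmod_gt_0; auto).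
  assert (Hrho : 0 < rho) by (unfold rho; pose proof (pow_lt r n ltac:(lra)); nra).
  destruct (coef_geom a f r Hf Hr) as [K [q [HK [Hq Hb]]]].
  set (s := Cmod (Cminus z c)) in *.
  assert (Hs : 0 <= s) by apply Cmod_ge_0.
  destruct (Req_dec s 0) as [Hs0'|Hs0'].
  { apply Cmod_eq_0 in Hs0'. apply Ceq_minus in Hs0'. subst z. auto. }
  assert (Hsp : 0 < s) by lra.
  assert (HsC : RtoC s <> RtoC 0) by (intro E; injection E; lra).
  set (e := Cdiv (Cminus z c) (RtoC s)).
  assert (He : Cmod e = 1).
  { unfold e. rewrite Cmod_div by auto. rewrite Cmod_R, Rabs_pos_eq by lra. fold s. field. lra. }
  assert (Hze : z = Cplus c (Cmult (RtoC s) e)).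
  { unfold e. field. exact HsC. }
  set (kap := (s0 + rho) / (2 * rho)).
  assert (Hrk : rho * kap = (s0 + rho) / 2) by (unfold kap; field; lra).
  assert (Hk1 : kap < 1) by nra.
  assert (Hk0 : 1 / 2 <= kap) by nra.
  set (sig := sqrt (1 - kap ^ 2)).
  assert (Hsig : 0 < sig) by (apply sqrt_lt_R0; nra).
  assert (Hsig2 : sig * sig = 1 - kap ^ 2) by (apply sqrt_sqrt; nra).
  set (eps := Rmin (rho * kap - s0) (rho * sig) / 2).
  assert (Heps1 : eps <= (rho * kap - s0) / 2) by (unfold eps; pose proof (Rmin_l (rho * kap - s0) (rho * sig)); lra).
  assert (Heps2 : eps <= (rho * sig) / 2) by (unfold eps; pose proof (Rmin_r (rho * kap - s0) (rho * sig)); lra).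
  assert (Heps0 : 0 < eps).
  { unfold eps. apply Rmin_case; nra. }
  assert (Hy : 0 < eps * (1 - q) / (K + 1)) by (apply Rdiv_lt_0_compat; nra).
  destruct (pow_lt_1_zero q ltac:(rewrite Rabs_pos_eq; lra) _ Hy) as [N1 HN1].
  set (N := (N1 + 2 * n + 1)%nat).
  assert (HN : (2 * n < N)%nat) by (unfold N; lia).
  assert (HKN : K * (q ^ (N - n) / (1 - q)) < eps).
  { specialize (HN1 (N - n)%nat ltac:(unfold N; lia)). rewrite Rabs_pos_eq in HN1 by (apply pow_le; lra).
    set (B := q ^ (N - n)) in *.
    assert (0 <= B) by (apply pow_le; lra).
    set (B' := B / (1 - q)).
    assert (HB : B = B' * (1 - q)) by (unfold B'; field; lra).
    assert (0 <= B') by (apply Rdiv_le_0_compat; lra).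
    assert (B' * (K + 1) < eps).
    { apply Rmult_lt_reg_r with (1 - q). lra.
      replace (B' * (K + 1) * (1 - q)) with (B * (K + 1)) by (rewrite HB; ring).
      apply Rmult_lt_reg_r with (/ (K + 1)). apply Rinv_0_lt_compat; lra.
      replace (B * (K + 1) * / (K + 1)) with B by (field; lra).
      replace (eps * (1 - q) * / (K + 1)) with (eps * (1 - q) / (K + 1)) by (unfold Rdiv; ring). lra. }
    nra. }
  set (v1 := Cmult e (kap, sig)). set (v2 := Cmult e (kap, - sig)).
  assert (Hv1 : Cmod v1 = 1).
  { unfold v1. rewrite Cmod_mult, He, Rmult_1_l. unfold Cmod. cbn [fst snd]. replace (kap ^ 2 + sig ^ 2) with 1 by nra. apply sqrt_1. }
  assert (Hv2 : Cmod v2 = 1).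
  { unfold v2. rewrite Cmod_mult, He, Rmult_1_l. unfold Cmod. cbn [fst snd]. replace (kap ^ 2 + (- sig) ^ 2) with 1 by nra. apply sqrt_1. }
  destruct (point_lemma g f a c n N r K q eps v1 Hconv Hf Hsub Ha0 Hn Hr Han Hq HK Hb HN HKN Hv1) as [Q1 [HQ1 HQ1b]].
  destruct (point_lemma g f a c n N r K q eps v2 Hconv Hf Hsub Ha0 Hn Hr Han Hq HK Hb HN HKN Hv2) as [Q2 [HQ2 HQ2b]].
  fold rho in HQ1b, HQ2b.
  assert (Hee : Cmult (Cconj e) e = RtoC 1) by (apply conj_unit; auto).
  set (X1 := Cmult (Cminus Q1 c) (Cconj e)). set (X2 := Cmult (Cminus Q2 c) (Cconj e)).
  assert (HX1 : Cmod (Cminus X1 (rho * kap, rho * sig)) < eps).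
  { replace (Cminus X1 (rho * kap, rho * sig)) with
      (Cmult (Cminus Q1 (Cplus c (Cmult (RtoC rho) v1))) (Cconj e)).
    rewrite Cmod_mult, Cmod_conj, He. lra.
    unfold X1, v1. transitivity (Cminus (Cmult (Cminus Q1 c) (Cconj e)) (Cmult (Cmult (RtoC rho) (kap, sig)) (Cmult (Cconj e) e))).
    ring. rewrite Hee. apply C_eq; simpl; ring. }
  assert (HX2 : Cmod (Cminus X2 (rho * kap, - (rho * sig))) < eps).
  { replace (Cminus X2 (rho * kap, - (rho * sig))) with
      (Cmult (Cminus Q2 (Cplus c (Cmult (RtoC rho) v2))) (Cconj e)).
    rewrite Cmod_mult, Cmod_conj, He. lra.
    unfold X2, v2. transitivity (Cminus (Cmult (Cminus Q2 c) (Cconj e)) (Cmult (Cmult (RtoC rho) (kap, - sig)) (Cmult (Cconj e) e))).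
    ring. rewrite Hee. apply C_eq; simpl; ring. }
  assert (HQX1 : Cminus Q1 c = Cmult X1 e).
  { unfold X1. transitivity (Cmult (Cminus Q1 c) (Cmult (Cconj e) e)). rewrite Hee; ring. ring. }
  assert (HQX2 : Cminus Q2 c = Cmult X2 e).
  { unfold X2. transitivity (Cmult (Cminus Q2 c) (Cmult (Cconj e) e)). rewrite Hee; ring. ring. }
  pose proof (Re_le_Cmod (Cminus X1 (rho * kap, rho * sig))) as R1.
  pose proof (Im_le_Cmod (Cminus X1 (rho * kap, rho * sig))) as I1.
  pose proof (Re_le_Cmod (Cminus X2 (rho * kap, - (rho * sig)))) as R2.
  pose proof (Im_le_Cmod (Cminus X2 (rho * kap, - (rho * sig)))) as I2.
  destruct X1 as [x1 y1]. destruct X2 as [x2 y2].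
  unfold Re, Im in R1, I1, R2, I2. simpl in R1, I1, R2, I2.
  assert (Rx1 : Rabs (x1 - rho * kap) < eps) by (unfold Rminus; lra).
  assert (Ry1 : Rabs (y1 - rho * sig) < eps) by (unfold Rminus; lra).
  assert (Rx2 : Rabs (x2 - rho * kap) < eps) by (unfold Rminus; lra).
  assert (Ry2 : Rabs (y2 - - (rho * sig)) < eps) by (unfold Rminus; lra).
  apply Rabs_lt_between' in Rx1. apply Rabs_lt_between' in Ry1.
  apply Rabs_lt_between' in Rx2. apply Rabs_lt_between' in Ry2.
  assert (Hy1 : 0 < y1) by lra. assert (Hy2 : y2 < 0) by lra.
  set (t := y1 / (y1 - y2)).
  assert (Ht : 0 <= t <= 1).
  { unfold t. split. apply Rdiv_le_0_compat; lra.
    apply Rmult_le_reg_r with (y1 - y2). lra. unfold Rdiv. rewrite Rmult_assoc, Rinv_l; lra. }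
  pose proof (Hconv Q1 Q2 HQ1 HQ2 t Ht) as HY.
  set (Y := Cplus (Cmult (RtoC (1 - t)) Q1) (Cmult (RtoC t) Q2)) in HY.
  set (R0 := (1 - t) * x1 + t * x2).
  assert (HR0 : s < R0) by (unfold R0; nra).
  assert (HYc : Cminus Y c = Cmult (RtoC R0) e).
  { unfold Y. transitivity (Cplus (Cmult (RtoC (1 - t)) (Cminus Q1 c)) (Cmult (RtoC t) (Cminus Q2 c))).
    apply C_eq; simpl; ring. rewrite HQX1, HQX2.
    replace (RtoC R0) with (Cplus (Cmult (RtoC (1 - t)) (x1, y1)) (Cmult (RtoC t) (x2, y2))). ring.
    apply C_eq; simpl. unfold R0; ring. unfold t. field. lra. }
  set (tau := s / R0).
  assert (Htau : 0 <= tau <= 1).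
  { unfold tau. split. apply Rdiv_le_0_compat; lra.
    apply Rmult_le_reg_r with R0. lra. unfold Rdiv. rewrite Rmult_assoc, Rinv_l; lra. }
  pose proof (Hconv c Y Hc HY tau Htau) as Hfin.
  replace z with (Cplus (Cmult (RtoC (1 - tau)) c) (Cmult (RtoC tau) Y)); auto.
  transitivity (Cplus c (Cmult (RtoC tau) (Cminus Y c))). apply C_eq; simpl; ring.
  rewrite HYc, Hze. rewrite Cmult_assoc, <- RtoC_mult. unfold tau. f_equal. f_equal. f_equal. field. lra.
Qed.

Lemma bernoulli (d : R) (n : nat) : 0 <= d <= 1 -> 1 - INR n * d <= (1 - d) ^ n.
Proof. intros Hd. induction n. simpl. lra. rewrite S_INR. simpl.
  assert (0 <= INR n) by apply pos_INR. nra. Qed.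

Lemma lb_from_glb (g : C -> C) (lam : R) :
  dist_boundary (g (RtoC 0)) (image_D g) = Finite lam ->
  forall s0, 0 <= s0 -> (forall z, Cmod (Cminus z (g (RtoC 0))) < s0 -> image_D g z) -> s0 <= lam.
Proof.
  intros Hd s0 Hs0 Hball.
  pose proof (Glb_Rbar_correct (fun d : R => exists w, boundary (image_D g) w /\ d = Cmod (Cminus w (g (RtoC 0))))) as [_ H].
  unfold dist_boundary in Hd. rewrite Hd in H. apply (H (Finite s0)).
  intros x [w [[_ Hw] ->]]. simpl.
  destruct (Rle_lt_dec s0 (Cmod (Cminus w (g (RtoC 0))))) as [Hl|Hl]; auto.
  exfalso. destruct (Hw (s0 - Cmod (Cminus w (g (RtoC 0)))) ltac:(lra)) as [v [Hv1 Hv2]].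
  apply Hv1, Hball.
  replace (Cminus v (g (RtoC 0))) with (Cplus (Cminus v w) (Cminus w (g (RtoC 0)))) by ring.
  eapply Rle_lt_trans. apply Cmod_triangle. lra.
Qed.

Lemma coef_bound (g f : C -> C) (a : nat -> C) (lam : R) :
  convex_image_D g ->
  (forall z, inD z -> is_pseries a z (f z)) ->
  (forall z, inD z -> image_D g (f z)) ->
  a O = g (RtoC 0) ->
  (forall s0, 0 <= s0 -> (forall z, Cmod (Cminus z (g (RtoC 0))) < s0 -> image_D g z) -> s0 <= lam) ->
  0 <= lam /\ forall n, (0 < n)%nat -> Cmod (a n) <= 2 * lam.
Proof.
  intros Hconv Hf Hsub Ha0 Hlb.
  assert (Hc : image_D g (g (RtoC 0))).
  { exists (RtoC 0). split; auto. unfold inD. rewrite Cmod_0. lra. }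
  assert (Hl0 : 0 <= lam).
  { apply Hlb. lra. intros z Hz. pose proof (Cmod_ge_0 (Cminus z (g (RtoC 0)))). lra. }
  split; auto. intros n Hn.
  assert (Hr : forall r, 0 < r < 1 -> Cmod (a n) * r ^ n <= 2 * lam).
  { intros r Hr. destruct (Ceq_dec (a n) (RtoC 0)) as [E|E].
    { rewrite E, Cmod_0. lra. }
    set (rho := Cmod (a n) * r ^ n / 2).
    destruct (Rle_lt_dec rho lam) as [H|H]. unfold rho in H; lra.
    exfalso. assert (Hs : (lam + rho) / 2 <= lam).
    { apply Hlb. lra. intros z Hz. eapply ball_lemma with (s0 := (lam + rho) / 2); eauto. fold rho. lra. }
    lra. }
  destruct (Rle_lt_dec (Cmod (a n)) (2 * lam)) as [H|H]; auto. exfalso.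
  set (A := Cmod (a n)) in *.
  assert (HnR : 1 <= INR n) by (apply (le_INR 1); lia).
  set (d := (A - 2 * lam) / (2 * INR n * A)).
  assert (Hd0 : 0 < d) by (unfold d; apply Rdiv_lt_0_compat; nra).
  assert (Hnd : INR n * d = (A - 2 * lam) / (2 * A)) by (unfold d; field; lra).
  assert (Hnd1 : INR n * d <= 1 / 2).
  { rewrite Hnd. apply Rmult_le_reg_r with (2 * A). lra. unfold Rdiv. rewrite Rmult_assoc, Rinv_l; lra. }
  assert (Hd1 : d < 1) by nra.
  specialize (Hr (1 - d) ltac:(lra)).
  pose proof (bernoulli d n ltac:(lra)) as B.
  assert (A * (1 - INR n * d) <= A * (1 - d) ^ n) by (apply Rmult_le_compat_l; lra).
  assert (A * (1 - INR n * d) = (A + 2 * lam) / 2) by (rewrite Hnd; field; lra).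
  lra.
Qed.

Lemma geom_scaled (c q : R) : Rabs q < 1 -> is_series (fun n => c * q ^ n) (c * / (1 - q)).
Proof. intros H. exact (is_series_scal_l (K:=R_AbsRing) c _ _ (is_series_geom q H)). Qed.

Definition Pq (r l : R) : R :=
  4 * r ^ 3 * l ^ 2 - (7 * r ^ 3 + 3 * r ^ 2 - 3 * r + 1) * l + 6 * r ^ 3 - 2 * r ^ 2 - 6 * r + 2.

Lemma Tf_bound (a : nat -> C) (lam r : R) :
  0 <= lam <= 1 -> (forall n, (0 < n)%nat -> Cmod (a n) <= 2 * lam) ->
  0 <= r < 1 -> 0 <= Pq r lam -> T_f a lam r <= lam.
Proof.
  intros Hl Ha Hr HP. unfold T_f.
  assert (Hr1 : Rabs r < 1) by (rewrite Rabs_pos_eq; lra).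
  assert (Hr2 : Rabs (r ^ 2) < 1) by (rewrite Rabs_pos_eq by (apply pow_le; lra); nra).
  assert (S1 : Series (fun n => Cmod (a (S n)) * r ^ S n) <= 2 * lam * r * / (1 - r)).
  { rewrite <- (is_series_unique _ _ (geom_scaled (2 * lam * r) r Hr1)).
    apply Series_le. 2: eexists; apply geom_scaled; auto.
    intros n. pose proof (Ha (S n) ltac:(lia)). pose proof (Cmod_ge_0 (a (S n))).
    assert (0 <= r ^ n) by (apply pow_le; lra). simpl.
    split. apply Rmult_le_pos; auto. apply Rmult_le_pos; lra.
    replace (2 * lam * r * r ^ n) with (2 * lam * (r * r ^ n)) by ring.
    apply Rmult_le_compat_r; auto. apply Rmult_le_pos; lra. }
  assert (S2 : Series (fun n => Cmod (a (S n)) ^ 2 * r ^ (2 * S n)) <= 4 * lam ^ 2 * r ^ 2 * / (1 - r ^ 2)).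
  { rewrite <- (is_series_unique _ _ (geom_scaled (4 * lam ^ 2 * r ^ 2) (r ^ 2) Hr2)).
    apply Series_le. 2: eexists; apply geom_scaled; auto.
    intros n. pose proof (Ha (S n) ltac:(lia)). pose proof (Cmod_ge_0 (a (S n))).
    rewrite pow_mult. assert (0 <= (r ^ 2) ^ n) by (apply pow_le; apply pow_le; lra).
    assert (0 <= r ^ 2) by (apply pow_le; lra). rewrite <- (tech_pow_Rmult (r ^ 2) n).
    split. apply Rmult_le_pos. apply pow_le; auto. apply Rmult_le_pos; lra.
    replace (4 * lam ^ 2 * r ^ 2 * (r ^ 2) ^ n) with ((2 * lam) ^ 2 * (r ^ 2 * (r ^ 2) ^ n)) by ring.
    apply Rmult_le_compat_r. apply Rmult_le_pos; lra.
    apply pow_incr. lra. }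
  assert (HK : 0 <= 1 / (2 - lam) + r / (1 - r)).
  { apply Rplus_le_le_0_compat; apply Rdiv_le_0_compat; lra. }
  eapply Rle_trans. apply Rplus_le_compat. exact S1. apply Rmult_le_compat_l. exact HK. exact S2.
  assert (E : lam - (2 * lam * r * / (1 - r) + (1 / (2 - lam) + r / (1 - r)) * (4 * lam ^ 2 * r ^ 2 * / (1 - r ^ 2)))
     = lam * Pq r lam / ((2 - lam) * (1 - r) * (1 - r ^ 2))).
  { unfold Pq. field. repeat split; try lra. nra. }
  assert (0 <= lam * Pq r lam / ((2 - lam) * (1 - r) * (1 - r ^ 2))).
  { apply Rdiv_le_0_compat. apply Rmult_le_pos; lra.
    apply Rmult_lt_0_compat. apply Rmult_lt_0_compat; lra. nra. }
  lra.
Qed.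

Lemma Pq_mono (x y l : R) : 0 <= x -> x < y -> y <= 1 / 3 -> 0 <= l <= 1 -> Pq y l < Pq x l.
Proof.
  intros Hx Hxy Hy Hl.
  set (S := x ^ 2 + x * y + y ^ 2). set (T := x + y).
  assert (E : Pq x l - Pq y l = (y - x) * (- 4 * l ^ 2 * S + l * (7 * S + 3 * T - 3) - 6 * S + 2 * T + 6)).
  { unfold Pq, S, T. ring. }
  assert (HS0 : 0 <= S) by (unfold S; nra). assert (HS1 : S <= 1 / 3) by (unfold S; nra).
  assert (HT0 : 0 <= T) by (unfold T; lra).
  assert (H1 : l ^ 2 * S <= l * S) by (assert (l ^ 2 <= l) by nra; nra).
  assert (H2 : 0 <= l * S) by nra. assert (H3 : 0 <= l * T) by nra.
  assert (0 < - 4 * l ^ 2 * S + l * (7 * S + 3 * T - 3) - 6 * S + 2 * T + 6) by nra.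
  nra.
Qed.

Lemma rs_facts (rs : R) : 0 < rs < 1 -> 3 * rs ^ 3 - 5 * rs ^ 2 - 3 * rs + 1 = 0 -> rs < 1 / 4.
Proof.
  intros Hr E. destruct (Rlt_le_dec rs (1/4)) as [H|H]; auto. exfalso.
  assert (E2 : 3 * rs ^ 3 - 5 * rs ^ 2 - 3 * rs + 1 = - 1 / 64 + (rs - 1 / 4) * (3 * rs ^ 2 - 17 / 4 * rs - 65 / 16)) by field.
  assert (3 * rs ^ 2 - 17 / 4 * rs - 65 / 16 < 0) by nra.
  assert ((rs - 1 / 4) * (3 * rs ^ 2 - 17 / 4 * rs - 65 / 16) <= 0) by nra.
  lra.
Qed.

Lemma Pq_rs (rs l : R) : 0 < rs < 1 -> 3 * rs ^ 3 - 5 * rs ^ 2 - 3 * rs + 1 = 0 -> 0 <= l <= 1 ->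
  Pq rs l = (1 - l) * (2 * (1 - rs ^ 2) * (1 - 3 * rs) - 4 * rs ^ 3 * l) /\
  0 < 2 * (1 - rs ^ 2) * (1 - 3 * rs) - 4 * rs ^ 3 * l.
Proof.
  intros Hr E Hl. pose proof (rs_facts rs Hr E) as H4. split.
  - assert (Pq rs l - (1 - l) * (2 * (1 - rs ^ 2) * (1 - 3 * rs) - 4 * rs ^ 3 * l) = l * (3 * rs ^ 3 - 5 * rs ^ 2 - 3 * rs + 1)) by (unfold Pq; ring).
    rewrite E in H. lra.
  - assert (rs ^ 2 <= 1 / 16) by nra. assert (rs ^ 3 <= 1 / 64) by nra.
    assert (0 <= rs ^ 3 * l) by (apply Rmult_le_pos; [apply pow_le|]; lra).
    assert (rs ^ 3 * l <= 1 / 64) by nra. nra.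
Qed.

Theorem theorem2 (g f : C -> C) (a : nat -> C) (lam rs : R) :
  analytic_D g -> univalent_D g -> convex_image_D g ->
  (forall z : C, inD z -> is_pseries a z (f z)) ->
  subordinate f g ->
  dist_boundary (g (RtoC 0)) (image_D g) = Finite lam ->
  lam <= 1 ->
  0 < rs < 1 -> 3 * rs ^ 3 - 5 * rs ^ 2 - 3 * rs + 1 = 0 ->
  (forall r : R, 0 <= r <= rs -> T_f a lam r <= lam) /\
  (0 < lam < 1 ->
   exists r0 : R,
     (rs < r0 < 1 / 3 /\
      4 * r0 ^ 3 * lam ^ 2 - (7 * r0 ^ 3 + 3 * r0 ^ 2 - 3 * r0 + 1) * lam
        + 6 * r0 ^ 3 - 2 * r0 ^ 2 - 6 * r0 + 2 = 0) /\
     (forall r1 : R, rs < r1 < 1 / 3 ->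
        4 * r1 ^ 3 * lam ^ 2 - (7 * r1 ^ 3 + 3 * r1 ^ 2 - 3 * r1 + 1) * lam
          + 6 * r1 ^ 3 - 2 * r1 ^ 2 - 6 * r1 + 2 = 0 -> r1 = r0) /\
     (forall r : R, 0 <= r <= r0 -> T_f a lam r <= lam)).
Proof.
  intros Hg Hun Hconv Hf Hsub Hd Hl1 Hrs Hcub.
  destruct Hsub as [om [Hom [HomD [Hom0 Hfg]]]].
  assert (H0D : inD (RtoC 0)) by (unfold inD; rewrite Cmod_0; lra).
  assert (Himg : forall z, inD z -> image_D g (f z)).
  { intros z Hz. exists (om z). split. apply HomD; auto. symmetry; apply Hfg; auto. }
  assert (Ha0 : a O = g (RtoC 0)).
  { pose proof (Hf _ H0D) as H1. pose proof (is_pseries_0 (K:=C_AbsRing) (V:=C_NormedModule) a) as H2.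
    rewrite Hfg in H1 by auto. rewrite Hom0 in H1.
    exact (filterlim_locally_unique _ _ _ H2 H1). }
  destruct (coef_bound g f a lam Hconv Hf Himg Ha0 (lb_from_glb g lam Hd)) as [Hl0 Hcoef].
  pose proof (rs_facts rs Hrs Hcub) as Hrs4.
  assert (HPrs : forall l, 0 <= l <= 1 -> 0 <= Pq rs l).
  { intros l Hl. destruct (Pq_rs rs l Hrs Hcub Hl) as [E P]. rewrite E. apply Rmult_le_pos; lra. }
  split.
  - intros r Hr. apply Tf_bound. lra. exact Hcoef. lra.
    destruct (Req_dec r rs). subst; apply HPrs; lra.
    apply Rlt_le. eapply Rle_lt_trans. apply (HPrs lam). split; lra. apply Pq_mono; lra.
  - intros Hl.
    assert (Hpos : 0 < Pq rs lam).
    { destruct (Pq_rs rs lam Hrs Hcub ltac:(lra)) as [E P]. rewrite E. apply Rmult_lt_0_compat; lra. }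
    assert (Hneg : Pq (1 / 3) lam < 0).
    { replace (Pq (1 / 3) lam) with (4 * lam / 27 * (lam - 4)) by (unfold Pq; field). nra. }
    assert (Hcont : continuity (fun r => - Pq r lam)).
    { unfold Pq. apply derivable_continuous. reg. }
    destruct (IVT (fun r => - Pq r lam) rs (1 / 3) Hcont ltac:(lra) ltac:(lra) ltac:(lra)) as [r0 [Hr0 E0]].
    assert (HP0 : Pq r0 lam = 0) by lra.
    assert (Hr0' : rs < r0 < 1 / 3).
    { split; destruct Hr0 as [Ha Hb].
      destruct Ha as [Ha|Ha]; auto. subst; lra.
      destruct Hb as [Hb|Hb]; auto. subst; lra. }
    exists r0. split. { split. exact Hr0'. exact HP0. } split.
    + intros r1 Hr1 E1. change (Pq r1 lam = 0) in E1.
      destruct (Rtotal_order r1 r0) as [H|[H|H]]; auto.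
      * pose proof (Pq_mono r1 r0 lam ltac:(lra) H ltac:(lra) ltac:(lra)). lra.
      * pose proof (Pq_mono r0 r1 lam ltac:(lra) H ltac:(lra) ltac:(lra)). lra.
    + intros r Hr. apply Tf_bound. lra. exact Hcoef. lra.
      destruct (Req_dec r r0). subst; lra.
      pose proof (Pq_mono r r0 lam ltac:(lra) ltac:(lra) ltac:(lra) ltac:(lra)). lra.
Qed.
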